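(* For all $n\ge1$, $k\ge1$ and every $\pi\in\mathbf{C}(n,k)$, the list $\mathcal{C}(\pi)$ has flip sequence $\sigma^k_n$; that is, if $\mathcal{C}(\pi)=L_1,L_2,\dots,L_N$ and $\sigma^k_n=f_1,f_2,\dots,f_{N'}$, then $N'=N-1$ and $L_{t+1}=\mathrm{flip}_{f_t}(L_t)$ for all $1\le t\le N-1$.
   Context: Fix integers $n\ge1$, $k\ge1$. A $k$-coloured permutation of $\{1,\dots,n\}$ is a sequence $\pi=p_1p_2\cdots p_n$ with $p_i=v_i^{c_i}$, where $v_1\cdots v_n$ is a permutation of $\{1,\dots,n\}$ and each $c_i\in\{0,\dots,k-1\}$; the set of these is $\mathbf{C}(n,k)$. A pre-perm is a prefix $p_1\cdots p_j$ ($1\le j\le n$) of some element of $\mathbf{C}(n,k)$. For $p=v^c$ and integer $s$, $p^{+s}=v^{(c+s)\bmod k}$; for $\mathbf{p}=p_1\cdots p_j$, $\mathbf{p}^{+s}=p_1^{+s}\cdots p_j^{+s}$. For $1\le i\le n$ and $\pi=p_1\cdots p_n$, the flip $\mathrm{flip}_i(\pi)=p_i^{+1}p_{i-1}^{+1}\cdots p_1^{+1}p_{i+1}\cdots p_n$ (reverse the first $i$ entries and increment their colours mod $k$). For a pre-perm $\mathbf{p}$ of length $j$, $\rho(\mathbf{p})=r_1\cdots r_m$ ($m=kj$) is the concatenation $\mathbf{p}^{+(k-1)}\mathbf{p}^{+(k-2)}\cdots\mathbf{p}^{+0}$ viewed circularly (indices mod $m$), and $\rho(\mathbf{p})_i=r_{i-j+1}\cdots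 r_{i-1}$ (length $j-1$, indices mod $m$). The list $\mathcal{C}(\mathbf{p})$: if $j=1$, $\mathcal{C}(p_1)=p_1^{+0},p_1^{+1},\dots,p_1^{+(k-1)}$; if $j\ge2$, $\mathcal{C}(\mathbf{p})$ is the concatenation for $i=m,m-1,\dots,1$ of the lists obtained from $\mathcal{C}(\rho(\mathbf{p})_i)$ by appending $r_i$ to every entry. The sequence $\sigma^k_n$ is defined recursively by $\sigma^k_1=1^{k-1}$ (the value $1$ repeated $k-1$ times; empty if $k=1$) and, for $n>1$, $\sigma^k_n=(\sigma^k_{n-1},n)^{kn-1},\sigma^k_{n-1}$, i.e. $kn-1$ copies of the block ''$\sigma^k_{n-1}$ followed by $n$'', followed by one more copy of $\sigma^k_{n-1}$. *)

(* Defs.v *)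
From mathcomp Require Import all_boot.
Set Implicit Arguments. Unset Strict Implicit. Unset Printing Implicit Defensive.

(* A coloured element v^c is the pair (v, c) : nat * nat. *)
Definition celt := (nat * nat)%type.

Definition is_cperm (n k : nat) (pi : seq celt) : Prop :=
  size pi = n /\ perm_eq (map fst pi) (iota 1 n) /\ all (fun x => x.2 < k) pi.

Definition cshift (k : nat) (s : nat) (x : celt) : celt := (x.1, (x.2 + s) %% k).
Definition pshift (k : nat) (s : nat) (p : seq celt) : seq celt := map (cshift k s) p.

Definition flip (k : nat) (i : nat) (pi : seq celt) : seq celt :=
  rev (pshift k 1 (take i pi)) ++ drop i pi.

(* rho(p) = p^{+(k-1)} p^{+(k-2)} ... p^{+0}, as a sequence r_1 .. r_m (0-based storage) *)
Definition rho (k : nat) (p : seq celt) : seq celt :=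
  flatten [seq pshift k (k - 1 - s) p | s <- iota 0 k].

(* r_i, 1 <= i <= m *)
Definition rho_elt (k : nat) (p : seq celt) (i : nat) : celt :=
  nth (0, 0) (rho k p) ((i + size (rho k p) - 1) %% size (rho k p)).

(* rho(p)_i = r_{i-j+1} ... r_{i-1}, indices taken circularly mod m *)
Definition rho_win (k : nat) (p : seq celt) (i : nat) : seq celt :=
  let r := rho k p in let m := size r in let j := size p in
  [seq nth (0, 0) r ((i + (m - j) + t) %% m) | t <- iota 0 (j - 1)].

(* The list C(p); fuel = size p makes recursion structural on length. *)
Fixpoint Clist_aux (k : nat) (fuel : nat) (p : seq celt) : seq (seq celt) :=
  match fuel with
  | 0 => [::]
  | f.+1 =>
    if size p == 1 then [seq [:: cshift k s (head (0, 0) p)] | s <- iota 0 k]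
    else flatten [seq [seq rcons L (rho_elt k p i) | L <- Clist_aux k f (rho_win k p i)]
                 | i <- rev (iota 1 (k * size p))]
  end.

Definition Clist (k : nat) (p : seq celt) : seq (seq celt) := Clist_aux k (size p) p.

Fixpoint sigma (k n : nat) : seq nat :=
  match n with
  | 0 => [::]
  | n'.+1 =>
    if n' is 0 then nseq (k - 1) 1
    else flatten (nseq (k * n - 1) (rcons (sigma k n') n)) ++ sigma k n'
  end.

(* Main.v *)
Require Import Defs.
From mathcomp Require Import all_boot.
From mathcomp Require Import zify.
Set Implicit Arguments. Unset Strict Implicit. Unset Printing Implicit Defensive.

Lemma cshiftC k a b x : cshift k a (cshift k b x) = cshift k (b + a) x.
Proof. by rewrite /cshift /= modnDml addnA. Qed.

Lemma cshiftk k x : cshift k k x = cshift k 0 x.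
Proof. by rewrite /cshift modnDr addn0. Qed.

Lemma pshiftC k a b p : pshift k a (pshift k b p) = pshift k (b + a) p.
Proof. by rewrite /pshift -map_comp; apply: eq_map => x; exact: cshiftC. Qed.

Fixpoint traj k (s : seq nat) (x : seq celt) : seq (seq celt) :=
  if s is f :: s' then x :: traj k s' (flip k f x) else [:: x].
Definition iterf k (s : seq nat) x := foldl (fun y f => flip k f y) x s.

Lemma size_traj k s x : size (traj k s x) = (size s).+1.
Proof. by elim: s x => //= f s IH x; rewrite IH. Qed.

Lemma traj_cat k s1 f s2 x :
  traj k (s1 ++ f :: s2) x = traj k s1 x ++ traj k s2 (flip k f (iterf k s1 x)).
Proof. by elim: s1 x => //= g s1 IH x; rewrite IH. Qed.

Lemma iterf_cat k s1 f s2 x :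
  iterf k (s1 ++ f :: s2) x = iterf k s2 (flip k f (iterf k s1 x)).
Proof. by rewrite /iterf foldl_cat. Qed.

Lemma nth_traj k s x t : 1 <= t <= size s ->
  nth [::] (traj k s x) t = flip k (nth 0 s (t - 1)) (nth [::] (traj k s x) (t - 1)).
Proof.
elim: s x t => [|f s IH] x [|[|t]] //= Ht.
- by case: s {IH Ht}.
- rewrite (IH (flip k f x) t.+1) //= subn1 //.
Qed.

Lemma size_flip k f q : size (flip k f q) = size q.
Proof. rewrite /flip size_cat size_rev size_map size_take size_drop.
case: ltnP => H; lia. Qed.

Lemma flip_rcons k f q a : f <= size q -> flip k f (rcons q a) = rcons (flip k f q) a.
Proof. move=> H; rewrite /flip drop_rcons // -[rcons q a]cats1 takel_cat // ?rcons_cat //. Qed.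

Lemma map_rcons_traj k s q a : (forall f, f \in s -> f <= size q) ->
  [seq rcons L a | L <- traj k s q] = traj k s (rcons q a).
Proof.
elim: s q => [|f s IH] q H //=.
rewrite IH; last by move=> g Hg; rewrite size_flip; apply: H; rewrite in_cons Hg orbT.
by rewrite flip_rcons // H // mem_head.
Qed.

Lemma iterf_rcons k s q a : (forall f, f \in s -> f <= size q) ->
  iterf k s (rcons q a) = rcons (iterf k s q) a.
Proof.
elim: s q => [|f s IH] q H //=.
rewrite /iterf /= -/(iterf k s _) flip_rcons ?H ?mem_head // IH //.
by move=> g Hg; rewrite size_flip; apply: H; rewrite in_cons Hg orbT.
Qed.

Lemma sigma_le k n f : f \in sigma k n -> f <= n.
Proof.
elim: n f => [|n IH] f //=.
case: n IH => [|n] IH.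
  by move/nseqP => [-> _].
rewrite mem_cat => /orP [|H]; last by apply: leqW; apply: IH.
move/flattenP => [s /nseqP [-> _]]; rewrite mem_rcons in_cons => /orP [/eqP -> //|H].
by apply: leqW; apply: IH.
Qed.

Lemma nth_flatten_const (T:Type) (d:T) (F : nat -> seq T) n a l s t :
  (forall i, size (F i) = n) -> s < l -> t < n ->
  nth d (flatten (map F (iota a l))) (s * n + t) = nth d (F (a + s)) t.
Proof.
move=> HF; elim: l a s => // l IH a [|s] Hs Ht /=.
- by rewrite mul0n add0n nth_cat HF Ht addn0.
- rewrite nth_cat HF mulSn -addnA ltnNge leq_addr /= addKn IH //.
  by rewrite addSnnS.
Qed.

Lemma size_flatten_const (T:Type) (F : nat -> seq T) n a l :
  (forall i, size (F i) = n) -> size (flatten (map F (iota a l))) = l * n.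
Proof. move=> HF; elim: l a => // l IH a /=. by rewrite size_cat IH HF mulSn. Qed.

Lemma size_rho k p : size (rho k p) = k * size p.
Proof. rewrite /rho (@size_flatten_const _ _ (size p)) // => i; exact: size_map. Qed.

Lemma nth_rho k p s t : s < k -> t < size p ->
  nth (0,0) (rho k p) (s * size p + t) = cshift k (k - 1 - s) (nth (0,0) p t).
Proof.
move=> Hs Ht; rewrite /rho (@nth_flatten_const _ _ _ (size p)) //.
- by rewrite add0n /pshift (nth_map (0,0)).
- by move=> i; rewrite size_map.
Qed.

Definition R k p x := nth (0,0) (rho k p) (x %% (k * size p)).

Lemma R_at k p x s t : s < k -> t < size p -> x %% (k * size p) = s * size p + t ->
  R k p x = cshift k (k - 1 - s) (nth (0,0) p t).
Proof. by move=> Hs Ht Hx; rewrite /R Hx nth_rho. Qed.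

Lemma decomp k (p : seq celt) x : 0 < size p -> 0 < k ->
  exists s t, [/\ s < k, t < size p & x %% (k * size p) = s * size p + t].
Proof.
move=> Hn Hk; set v := x %% _.
have Hv : v < k * size p by apply: ltn_pmod; rewrite muln_gt0 Hk.
exists (v %/ size p), (v %% size p); split.
- by rewrite ltn_divLR.
- exact: ltn_pmod.
- exact: divn_eq.
Qed.

Lemma R_shift0 k p x : 0 < size p -> 0 < k -> cshift k 0 (R k p x) = R k p x.
Proof.
move=> Hn Hk; have [s [t [Hs Ht Hx]]] := decomp x Hn Hk.
by rewrite (R_at Hs Ht Hx) cshiftC addn0.
Qed.

Lemma modE a b m c : b < m -> a = c * m + b -> a %% m = b.
Proof. by move=> Hb ->; rewrite modnMDl modn_small. Qed.

Lemma lt_mn s t k n : s < k -> t < n -> s * n + t < k * n.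
Proof.
move=> H1 H2; apply: (@leq_trans (s.+1 * n)).
  by rewrite mulSn addnC ltn_add2r.
by rewrite leq_mul2r H1 orbT.
Qed.

Lemma R_rot k p u : 0 < size p -> 0 < k ->
  cshift k 1 (R k p (u + size p)) = R k p u.
Proof.
move=> Hn Hk; set n := size p.
have [s [t [Hs Ht Hx]]] := decomp u Hn Hk.
rewrite (R_at Hs Ht Hx).
set q := u %/ (k * n).
have Hu : u = q * (k * n) + (s * n + t) by rewrite -Hx -divn_eq.
case: (ltnP s.+1 k) => Hs1.
- rewrite (@R_at _ _ _ s.+1 t) // ?cshiftC; last first.
    apply: (@modE _ _ _ q); first exact: lt_mn.
    rewrite {1}Hu mulSn; lia.
  congr cshift; lia.
- have Hsk : s.+1 = k by apply/eqP; rewrite eqn_leq Hs1 Hs.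
  have Hsn : s * n + n = k * n by rewrite -Hsk mulSn addnC.
  rewrite (@R_at _ _ _ 0 t) // ?cshiftC; last first.
    apply: (@modE _ _ _ q.+1); first by apply: (leq_trans Ht); rewrite leq_pmull.
    rewrite {1}Hu mulSn; lia.
  rewrite subn0 subnK // cshiftk; congr cshift; lia.
Qed.

Lemma map_iotaSr (T:Type) (f : nat -> T) l :
  map f (iota 0 l.+1) = rcons (map f (iota 0 l)) (f l).
Proof. by rewrite -addn1 iotaD map_cat cats1. Qed.

Lemma map_iotaSl (T:Type) (f : nat -> T) l :
  map f (iota 0 l.+1) = f 0 :: map (fun t => f t.+1) (iota 0 l).
Proof.
have E : iota 1 l = map (addn 1) (iota 0 l) by rewrite -iotaDl.
by rewrite /= E -map_comp.
Qed.

Lemma rho_elt_R k p i : rho_elt k p i = R k p (i + k * size p - 1).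
Proof. by rewrite /rho_elt /R size_rho. Qed.

Lemma rho_win_R k p i : rho_win k p i =
  [seq R k p (i + (k * size p - size p) + t) | t <- iota 0 (size p - 1)].
Proof. by rewrite /rho_win /R size_rho. Qed.

Lemma size_rho_win k p i : size (rho_win k p i) = size p - 1.
Proof. by rewrite /rho_win size_map size_iota. Qed.

Lemma R_at' k p x s t c : s < k -> t < size p ->
  x = c * (k * size p) + (s * size p + t) ->
  R k p x = cshift k (k - 1 - s) (nth (0,0) p t).
Proof.
move=> Hs Ht Hx; apply: R_at => //; apply: (modE (c := c)) => //.
exact: lt_mn.
Qed.

Lemma FL k w a : 0 < k ->
  flip k (size w).+1 (rcons (rev (pshift k (k-1) w)) a) = cshift k 1 a :: pshift k 0 w.
Proof.
move=> Hk.
rewrite /flip take_oversize ?drop_oversize ?size_rcons ?size_rev ?size_map // cats0.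
rewrite /pshift map_rcons rev_rcons map_rev revK; congr (_ :: _).
rewrite -map_comp; apply: eq_map => x /=; by rewrite cshiftC subnK // cshiftk.
Qed.

Lemma win_step k p i : 0 < k -> 0 < size p ->
  cshift k 1 (rho_elt k p i.+1) :: pshift k 0 (rho_win k p i.+1)
  = rcons (pshift k 0 (rho_win k p i)) (rho_elt k p i).
Proof.
move=> Hk Hp.
have Hnm : size p <= k * size p by rewrite leq_pmull.
have Hrot := R_rot _ Hp Hk.
have HR0 := fun x => R_shift0 x Hp Hk.
rewrite !rho_win_R !rho_elt_R /pshift -!map_comp.
have [l Hl] : exists l, size p = l.+1 by exists (size p).-1; lia.
rewrite Hl in Hnm Hrot *.
have E : l.+1 - 1 = l by lia.
rewrite E.
transitivity (map (fun t => R k p (i + (k * l.+1 - l.+1) + t)) (iota 0 l.+1)).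
- rewrite map_iotaSl; congr (_ :: _).
  + rewrite (_ : i.+1 + k * l.+1 - 1 = (i + (k * l.+1 - l.+1)) + l.+1); last lia.
    by rewrite Hrot addn0.
  + apply: eq_map => t /=; rewrite HR0; congr (R k p _); lia.
- rewrite map_iotaSr; congr rcons.
  + by apply: eq_map => t /=; rewrite HR0.
  + congr (R k p _); lia.
Qed.

Lemma first_block k p : 0 < k -> 0 < size p ->
  rcons (pshift k 0 (rho_win k p (k * size p))) (rho_elt k p (k * size p)) = pshift k 0 p.
Proof.
move=> Hk Hp.
have -> : pshift k 0 p = map (fun t => cshift k 0 (nth (0,0) p t)) (iota 0 (size p)).
  by rewrite /pshift -[in LHS](take_size p) -(map_nth_iota0 (0,0)) // -map_comp.
have Hnm : size p <= k * size p by rewrite leq_pmull.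
have Hkm : (k - 1) * size p = k * size p - size p by rewrite mulnBl mul1n.
rewrite rho_win_R rho_elt_R /pshift -map_comp.
have [l Hl] : exists l, size p = l.+1 by exists (size p).-1; lia.
rewrite Hl in Hkm Hnm *.
have E : l.+1 - 1 = l by lia.
rewrite map_iotaSr E; congr rcons.
- apply/eq_in_map => t; rewrite mem_iota => /andP [_ Ht] /=.
  rewrite (@R_at' _ _ _ (k-1) t 1); first by rewrite cshiftC subnn.
  + lia.
  + rewrite Hl; lia.
  + lia.
- rewrite (@R_at' _ _ _ (k-1) l 1); first by rewrite subnn.
  + lia.
  + rewrite Hl; lia.
  + lia.
Qed.

Lemma last_block k p0 p' : 0 < k ->
  rcons (rev (pshift k (k-1) (rho_win k (p0 :: p') 1))) (rho_elt k (p0 :: p') 1)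
  = rev (pshift k (k-1) (p0 :: p')).
Proof.
move=> Hk.
set p := p0 :: p'.
have Hsp : size p = (size p').+1 by [].
have Hnm : size p <= k * size p by rewrite leq_pmull.
have Hkm : (k - 1) * size p = k * size p - size p by rewrite mulnBl mul1n.
rewrite /pshift map_cons rev_cons; congr rcons.
- congr rev.
  have -> : map (cshift k (k-1)) p' = map (fun t => cshift k (k-1) (nth (0,0) p' t)) (iota 0 (size p')).
    by rewrite -[in LHS](take_size p') -(map_nth_iota0 (0,0)) // -map_comp.
  rewrite rho_win_R -map_comp Hsp subSS subn0.
  apply/eq_in_map => t; rewrite mem_iota => /andP [_ Ht] /=.
  rewrite (@R_at' _ _ _ (k-1) t.+1 0); first by rewrite cshiftC subnn.
  + lia.
  + rewrite Hsp; lia.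
  + rewrite Hsp in Hkm Hnm *; lia.
- rewrite rho_elt_R (@R_at' _ _ _ 0 0 1) ?subn0 //.
  rewrite Hsp in Hnm *; lia.
Qed.

Lemma Clist_aux_S k f p : Clist_aux k f.+1 p =
  if size p == 1 then [seq [:: cshift k s (head (0, 0) p)] | s <- iota 0 k]
  else flatten [seq [seq rcons L (rho_elt k p i) | L <- Clist_aux k f (rho_win k p i)]
               | i <- rev (iota 1 (k * size p))].
Proof. by []. Qed.

Definition Bk k p i := [seq rcons L (rho_elt k p i) | L <- Clist k (rho_win k p i)].
Definition st k p i := rcons (pshift k 0 (rho_win k p i)) (rho_elt k p i).

Lemma Clist_unfold k p n : size p = n.+2 ->
  Clist k p = flatten [seq Bk k p i | i <- rev (iota 1 (k * n.+2))].
Proof.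
move=> Hs; rewrite /Clist Hs Clist_aux_S Hs (_ : (n.+2 == 1) = false) //; congr flatten; apply: eq_map => i.
by rewrite /Bk /Clist size_rho_win Hs.
Qed.

Lemma traj_nseq1 k l a x :
  traj k (nseq l 1) [:: cshift k a x] = [seq [:: cshift k s x] | s <- iota a l.+1].
Proof.
elim: l a => [|l IH] a //=.
by rewrite /flip /= cshiftC addn1 IH.
Qed.

Lemma iterf_nseq1 k l a x :
  iterf k (nseq l 1) [:: cshift k a x] = [:: cshift k (a + l) x].
Proof.
elim: l a => [|l IH] a; first by rewrite addn0.
by rewrite /iterf /= -/(iterf _ _ _) /flip /= cshiftC IH addn1 addSnnS.
Qed.

Lemma main k n : 0 < k -> forall p, size p = n.+1 ->
  Clist k p = traj k (sigma k n.+1) (pshift k 0 p) /\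
  iterf k (sigma k n.+1) (pshift k 0 p) = rev (pshift k (k-1) p).
Proof.
move=> Hk; elim: n => [|n IH] p Hp.
  case: p Hp => [|x [|]] //= _.
  have Ek : k = (k - 1).+1 by lia.
  rewrite /Clist /= /pshift /=; split.
  - by rewrite traj_nseq1 -Ek.
  - by rewrite iterf_nseq1 add0n.
set S := sigma k n.+1.
have Hsig : sigma k n.+2 = flatten (nseq (k * n.+2 - 1) (rcons S n.+2)) ++ S by [].
have Hp0 : 0 < size p by rewrite Hp.
have HB : forall i, Bk k p i = traj k S (st k p i).
  move=> i; rewrite /Bk (IH _ _).1; last by rewrite size_rho_win Hp.
  rewrite map_rcons_traj // => f Hf; rewrite size_map size_rho_win Hp subSS subn0.
  exact: (sigma_le Hf).
have Hit : forall i, iterf k S (st k p i) = rcons (rev (pshift k (k-1) (rho_win k p i))) (rho_elt k p i).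
  move=> i; rewrite /st iterf_rcons; first by rewrite /S (IH _ _).2 // size_rho_win Hp.
  move=> f Hf; rewrite size_map size_rho_win Hp subSS subn0; exact: (sigma_le Hf).

have Htr : forall i, flip k n.+2 (iterf k S (st k p i.+1)) = st k p i.
  move=> i; rewrite Hit.
  have := FL (rho_win k p i.+1) (rho_elt k p i.+1) Hk.
  rewrite size_rho_win Hp subSS subn0 => ->.
  exact: win_step.
have Ef : forall (T : Type) (x : seq T) s, flatten (x :: s) = x ++ flatten s by [].
have BL : forall l,
  flatten [seq Bk k p i | i <- rev (iota 1 l.+1)] =
    traj k (flatten (nseq l (rcons S n.+2)) ++ S) (st k p l.+1) /\
  iterf k (flatten (nseq l (rcons S n.+2)) ++ S) (st k p l.+1) = iterf k S (st k p 1).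
  elim=> [|l [IH1 IH2]].
    by rewrite (_ : rev (iota 1 1) = [:: 1]) // Ef HB cats0.
  have Ei : iota 1 l.+2 = rcons (iota 1 l.+1) l.+2 by rewrite -cats1 (_ : [:: l.+2] = iota (1 + l.+1) 1) // -iotaD addn1.
  have En : flatten (nseq l.+1 (rcons S n.+2)) ++ S =
            S ++ n.+2 :: (flatten (nseq l (rcons S n.+2)) ++ S).
    by rewrite (_ : nseq l.+1 (rcons S n.+2) = rcons S n.+2 :: nseq l (rcons S n.+2)) // Ef -catA cat_rcons.
  rewrite Ei rev_rcons map_cons Ef En traj_cat iterf_cat Htr IH1 IH2 HB.
  by split.
have Em : k * n.+2 = (k * n.+2 - 1).+1.
  have : 0 < k * n.+2 by rewrite muln_gt0 Hk.
  lia.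
have [B1 B2] := BL (k * n.+2 - 1).
have Est : st k p (k * n.+2) = pshift k 0 p by rewrite /st -Hp first_block.
rewrite -Em Est Hit in B1 B2.
rewrite (Clist_unfold k Hp) Hsig; split; first exact: B1.
rewrite B2.
case: p Hp {Hp0 HB Hit Htr BL B1 B2 Est} => [//|p0 p'] _.
exact: last_block.
Qed.

Theorem lemma2 (n k : nat) (pi : seq celt) :
  1 <= n -> 1 <= k -> is_cperm n k pi ->
  size (sigma k n) + 1 = size (Clist k pi) /\
  (forall t : nat, 1 <= t <= size (Clist k pi) - 1 ->
     nth [::] (Clist k pi) t =
     flip k (nth 0 (sigma k n) (t - 1)) (nth [::] (Clist k pi) (t - 1))).
Proof.
move=> Hn Hk [Hs _].
case: n Hn Hs => [//|n] _ Hs.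
have [-> _] := main Hk Hs.
rewrite size_traj addn1; split => // t Ht.
apply: nth_traj; lia.
Qed.
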